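(* An $R$-module $V$ is a Whittaker module of type $\eta$ if and only if there is an ideal $Z_*$ of $Z=Z(R)$ such that \[ V\cong R\otimes_{Z\otimes R(E)}(Z/Z_* )_\eta . \] Moreover, in this case the ideal $Z_*$ is uniquely determined and equals $Z_V$.
   Context: Let $f\in\mathbb{C}[H]$ be a polynomial. $R=R(f)$ is the associative $\mathbb{C}$-algebra generated by $E,F,H$ with relations $EF-FE=f(H)$, $HE-EH=E$, $HF-FH=-F$. Let $R(E)=\mathbb{C}[E]$. Let $u\in\mathbb{C}[H]$ satisfy $f(H)=\tfrac12(u(H+1)-u(H))$ and $\Omega=2FE+u(H+1)$; the center $Z=Z(R)$ is the polynomial ring $\mathbb{C}[\Omega]$. The subalgebra of $R$ generated by $Z$ and $E$ is commutative and identified with $Z\otimes R(E)$. Fix an algebra homomorphism $\eta:R(E)\to\mathbb{C}$ with $\eta(E)\neq0$. For an ideal $Z_*\subseteq Z$, $(Z/Z_* )_\eta$ denotes the $Z\otimes R(E)$-module $Z/Z_*$ on which $Z$ acts by multiplication and $x\in R(E)$ acts by the scalar $\eta(x)$. A vector $v$ of an $R$-module $V$ is a Whittaker vector (of type $\eta$) if $Ev=\eta(E)v$; $V$ is a Whittaker module of type $\eta$ if $V=Rv$ for some Whittaker vector $v$. $Z_V=\mathrm{Ann}_R(V)\cap Z$. *)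

(* Defs.v *)
From HB Require Import structures.
From mathcomp Require Import all_boot all_order all_algebra.
From mathcomp Require Import complex.
From mathcomp Require Import Rstruct.
Set Implicit Arguments. Unset Strict Implicit. Unset Printing Implicit Defensive.
Import Order.TTheory GRing.Theory Num.Theory.
Local Open Scope ring_scope.

Definition C : fieldType := (Rdefinitions.R)[i].

Definition pact (V : lmodType C) (T : V -> V) (p : {poly C}) (v : V) : V :=
  \sum_(i < size p) p`_i *: iter i T v.

(* (V, E, F, H) is a (left) module over R(f) = C<E,F,H>/(relations) *)
Definition is_Rmod (f : {poly C}) (V : lmodType C) (E F H : V -> V) : Prop :=
  [/\ linear E, linear F, linear H &
      forall v : V,
        [/\ E (F v) - F (E v) = pact H f v,
            H (E v) - E (H v) = E v &
            H (F v) - F (H v) = - F v]].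

Definition Omega (u : {poly C}) (V : lmodType C) (E F H : V -> V) (v : V) : V :=
  2%:R *: F (E v) + pact H (u \Po ('X + 1)) v.

Definition zact (u : {poly C}) (V : lmodType C) (E F H : V -> V)
  (p : {poly C}) (v : V) : V := pact (Omega u E F H) p v.

(* V = R v : the smallest R-submodule containing v is V *)
Definition generates (V : lmodType C) (E F H : V -> V) (v : V) : Prop :=
  forall S : V -> Prop,
    S 0 -> (forall x y, S x -> S y -> S (x + y)) ->
    (forall (a : C) x, S x -> S (a *: x)) ->
    (forall x, S x -> [/\ S (E x), S (F x) & S (H x)]) ->
    S v -> forall x, S x.

(* v is a Whittaker vector of type eta (eta stands for eta(E)) *)
Definition whittaker_vector (eta : C) (V : lmodType C) (E : V -> V) (v : V) :=
  E v = eta *: v.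

Definition is_whittaker_module (eta : C) (V : lmodType C) (E F H : V -> V) :=
  exists v : V, whittaker_vector eta E v /\ generates E F H v.

(* Z_V = Ann_R(V) ∩ Z, as a set of polynomials p with p(Omega) = 0 on V *)
Definition ZV (u : {poly C}) (V : lmodType C) (E F H : V -> V) (p : {poly C}) :=
  forall v : V, zact u E F H p v = 0.

(* ideals of Z = C[Omega] (identified with {poly C}) *)
Definition is_ideal (I : {poly C} -> Prop) : Prop :=
  [/\ I 0, (forall p q, I p -> I q -> I (p + q)) & (forall p q, I q -> I (p * q))].

Definition Rhom (V W : lmodType C) (E F H : V -> V) (E' F' H' : W -> W)
  (phi : V -> W) : Prop :=
  [/\ linear phi, forall v, phi (E v) = E' (phi v),
      forall v, phi (F v) = F' (phi v) & forall v, phi (H v) = H' (phi v)].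

(* (V,E,F,H) is isomorphic to R ⊗_{Z⊗R(E)} (Z/I)_eta, expressed through the
   universal property of this induced module: with w the image of 1⊗1,
   Hom_R(V, W) ≅ Hom_{Z⊗R(E)}((Z/I)_eta, W) via phi |-> (1 + I |-> phi w). *)
Definition is_induced (f u : {poly C}) (eta : C) (I : {poly C} -> Prop)
  (V : lmodType C) (E F H : V -> V) : Prop :=
  exists w : V,
    [/\ E w = eta *: w, (forall p, I p -> zact u E F H p w = 0) &
    forall (W : lmodType C) (E' F' H' : W -> W), is_Rmod f E' F' H' ->
      forall w' : W, E' w' = eta *: w' -> (forall p, I p -> zact u E' F' H' p w' = 0) ->
      exists phi : V -> W,
        [/\ Rhom E F H E' F' H' phi, phi w = w' &
           forall psi : V -> W, Rhom E F H E' F' H' psi -> psi w = w' ->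
             forall x, psi x = phi x]].

(* Main.v *)
Require Import Defs.
From HB Require Import structures.
From mathcomp Require Import all_boot all_order all_algebra.
From mathcomp Require Import complex.
From mathcomp Require Import Rstruct.
From mathcomp Require Import ring.
From Stdlib Require Import ClassicalEpsilon Classical.
Set Implicit Arguments. Unset Strict Implicit. Unset Printing Implicit Defensive.
Import Order.TTheory GRing.Theory Num.Theory.
Local Open Scope ring_scope.

Lemma size_mulX_leq (R : nzRingType) (p : {poly R}) : (size (p * 'X)%R <= (size p).+1)%N.
Proof. case: (p =P 0) => [->|/eqP h]; [by rewrite mul0r size_poly0 | by rewrite size_mulX]. Qed.

Lemma natr_neq0C (n : nat) : (n.+1%:R : C) != 0.
Proof. by rewrite (pnatr_eq0 (Rdefinitions.R)[i]). Qed.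

Section Lin.
Variables V W : lmodType C.
Variable T : V -> W.
Hypothesis lT : linear T.

Lemma T0 : T 0 = 0.
Proof. have h := lT 1 0 0; rewrite !scale1r addr0 in h. by apply: (addrI (T 0)); rewrite addr0 -h. Qed.
Lemma TD x y : T (x + y) = T x + T y.
Proof. by have := lT 1 x y; rewrite !scale1r. Qed.
Lemma TZ a x : T (a *: x) = a *: T x.
Proof. by have := lT a x 0; rewrite !addr0 T0 addr0. Qed.
Lemma TN x : T (- x) = - T x.
Proof. by rewrite -(scaleN1r x) TZ scaleN1r. Qed.
Lemma TB x y : T (x - y) = T x - T y.
Proof. by rewrite TD TN. Qed.
Lemma Tsum I (r : seq I) (P : pred I) (G : I -> V) :
  T (\sum_(i <- r | P i) G i) = \sum_(i <- r | P i) T (G i).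
Proof. exact: (big_morph T TD T0). Qed.

End Lin.

Section Pact.
Variable V : lmodType C.
Variable T : V -> V.
Hypothesis lT : linear T.

Lemma iter_lin n : linear (iter n T).
Proof. elim: n => [|n IH] a x y //=; by rewrite IH (lT a). Qed.

Lemma pact_wide (p : {poly C}) (n : nat) v : (size p <= n)%N ->
  pact T p v = \sum_(i < n) p`_i *: iter i T v.
Proof.
move=> hn; rewrite /pact (big_ord_widen n (fun i => p`_i *: iter i T v) hn).
rewrite big_mkcond /=; apply: eq_bigr => i _.
case: ifP => // /negbT; rewrite -leqNgt => h; by rewrite nth_default // scale0r.
Qed.

Lemma pactD p q v : pact T (p + q) v = pact T p v + pact T q v.
Proof.
set n := maxn (size p) (size q).
rewrite !(@pact_wide _ n) ?leq_maxl ?leq_maxr //; last by rewrite (leq_trans (size_polyD _ _)).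
by rewrite -big_split; apply: eq_bigr => i _; rewrite coefD scalerDl.
Qed.

Lemma pactZ a p v : pact T (a *: p) v = a *: pact T p v.
Proof.
rewrite !(@pact_wide _ (size p)) ?size_scale_leq //.
rewrite scaler_sumr; apply: eq_bigr => i _; by rewrite coefZ scalerA.
Qed.

Lemma pact0 v : pact T 0 v = 0.
Proof. by rewrite /pact size_poly0 big_ord0. Qed.

Lemma pactN p v : pact T (- p) v = - pact T p v.
Proof. by rewrite -(scaleN1r p) pactZ scaleN1r. Qed.
Lemma pactB p q v : pact T (p - q) v = pact T p v - pact T q v.
Proof. by rewrite pactD pactN. Qed.

Lemma pact_lin p : linear (pact T p).
Proof.
move=> a x y; rewrite /pact scaler_sumr -big_split; apply: eq_bigr => i _.
by rewrite (iter_lin i a) scalerDr !scalerA mulrC.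
Qed.

Lemma pactC c v : pact T c%:P v = c *: v.
Proof.
rewrite (@pact_wide _ 1) ?size_polyC ?leq_b1 // big_ord1 coefC /=. by [].
Qed.

Lemma pact1 v : pact T 1 v = v.
Proof. by rewrite pactC scale1r. Qed.

Lemma pactMX p v : pact T (p * 'X) v = T (pact T p v).
Proof.
rewrite (@pact_wide _ (size p).+1); last by rewrite size_mulX_leq.
rewrite big_ord_recl coefMX eqxx scale0r add0r /pact (Tsum lT).
apply: eq_bigr => i _; by rewrite coefMX /= (TZ lT).
Qed.

Lemma pactMX' p v : pact T (p * 'X) v = pact T p (T v).
Proof.
rewrite (@pact_wide _ (size p).+1); last by rewrite size_mulX_leq.
rewrite big_ord_recl coefMX eqxx scale0r add0r /pact.
apply: eq_bigr => i _; rewrite coefMX /=. rewrite -iterSr. by [].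
Qed.

Lemma pactM p q v : pact T (p * q) v = pact T p (pact T q v).
Proof.
elim/poly_ind: p q v => [|p c IH] q v.
  by rewrite mul0r !pact0.
rewrite mulrDl pactD -mulrA IH (mulrC 'X) pactMX pactD pactMX'.
by rewrite mul_polyC pactZ pactC.
Qed.

Lemma pactX v : pact T 'X v = T v.
Proof. by rewrite -[X in pact _ X]mul1r pactMX pact1. Qed.

Lemma pactXn n v : pact T ('X^n) v = iter n T v.
Proof. elim: n v => [|n IH] v; first by rewrite expr0 pact1.
by rewrite exprS pactM pactX IH. Qed.

End Pact.

Lemma pact_sum (V : lmodType C) (T : V -> V) I (r : seq I) (P : pred I) (G : I -> {poly C}) v :
  pact T (\sum_(i <- r | P i) G i) v = \sum_(i <- r | P i) pact T (G i) v.
Proof. exact: (big_morph (fun p => pact T p v) (fun p q => pactD T p q v) (pact0 T v)). Qed.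

Lemma pact_comp (V : lmodType C) (T : V -> V) (lT : linear T) p r v :
  pact T (p \Po r) v = pact (pact T r) p v.
Proof.
rewrite comp_polyE pact_sum /pact; apply: eq_bigr => i _.
rewrite -/(pact T _ v) pactZ; congr (_ *: _).
elim: (nat_of_ord i) v => [|n IH] v; first by rewrite expr0 pact1.
by rewrite exprS pactM // IH.
Qed.

Lemma pact_commute (V W : lmodType C) (T : V -> V) (S : W -> W) (A : V -> W)
  (lA : linear A) (hA : forall v, A (T v) = S (A v)) p v :
  A (pact T p v) = pact S p (A v).
Proof.
rewrite /pact (Tsum lA); apply: eq_bigr => i _; rewrite (TZ lA); congr (_ *: _).
by elim: (nat_of_ord i) => [|n IH] //=; rewrite hA IH.
Qed.

Lemma pact_lin_op (V : lmodType C) (T : V -> V) (lT : linear T) p : linear (pact T p).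
Proof. exact: pact_lin. Qed.

Section Rm.
Variables (f u : {poly C}) (V : lmodType C) (E F H : V -> V).
Hypothesis hV : is_Rmod f E F H.
Hypothesis hu : f = 2%:R^-1 *: (u \Po ('X + 1) - u).

Lemma lE : linear E. Proof. by case: hV. Qed.
Lemma lF : linear F. Proof. by case: hV. Qed.
Lemma lH : linear H. Proof. by case: hV. Qed.
Lemma relEF v : E (F v) = F (E v) + pact H f v.
Proof. by case: hV => _ _ _ /(_ v) [/eqP h _ _]; move: h; rewrite subr_eq => /eqP ->; rewrite addrC. Qed.
Lemma relHE v : E (H v) = H (E v) - E v.
Proof. case: hV => _ _ _ /(_ v) [_ h _]. by rewrite -[X in _ = _ - X]h opprB addrCA subrr addr0. Qed.
Lemma relHF v : F (H v) = H (F v) + F v.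
Proof. case: hV => _ _ _ /(_ v) [_ _ h].
have h' : F v = F (H v) - H (F v) by rewrite -opprB h opprK.
by rewrite {2}h' addrCA subrr addr0. Qed.

Lemma E_pact q v : E (pact H q v) = pact H (q \Po ('X - 1)) (E v).
Proof.
rewrite (pact_comp lH) (pact_commute (S := pact H ('X - 1)) lE) // => w.
by rewrite relHE pactB (pactX lH) pact1.
Qed.

Lemma F_pact q v : F (pact H q v) = pact H (q \Po ('X + 1)) (F v).
Proof.
rewrite (pact_comp lH) (pact_commute (S := pact H ('X + 1)) lF) // => w.
by rewrite relHF pactD (pactX lH) pact1.
Qed.

Lemma H_pact q v : H (pact H q v) = pact H q (H v).
Proof. exact: (pact_commute lH). Qed.

Lemma two_neq0 : (2%:R : C) != 0. Proof. exact: (natr_neq0C 1). Qed.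

Lemma two_f : 2%:R *: f = u \Po ('X + 1) - u.
Proof. by rewrite hu scalerA mulfV ?two_neq0 // scale1r. Qed.

Lemma lOmega : linear (Omega u E F H).
Proof.
move=> a x y; rewrite /Omega (lE a) (lF a) (pact_lin lH _ a).
by rewrite scalerDr !scalerA mulrC -scalerA addrACA scalerDr.
Qed.

Lemma comp_shift_K (p : {poly C}) : (p \Po ('X + 1)) \Po ('X - 1) = p.
Proof. by rewrite -polyC1 comp_polyXaddC_K. Qed.
Lemma comp_shift_K' (p : {poly C}) : (p \Po ('X - 1)) \Po ('X + 1) = p.
Proof. by have := comp_polyXaddC_K p (-1); rewrite polyCN opprK polyC1. Qed.

Lemma Omega_E v : E (Omega u E F H v) = Omega u E F H (E v).
Proof.
rewrite /Omega (TD lE) (TZ lE) relEF E_pact comp_shift_K scalerDr -addrA; congr (_ + _).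
rewrite -(pactZ H) two_f pactB //. by rewrite subrK.
Qed.

Lemma Omega_F v : F (Omega u E F H v) = Omega u E F H (F v).
Proof.
rewrite /Omega (TD lF) (TZ lF) relEF F_pact (TD lF) scalerDr -addrA; congr (_ + _).
by rewrite F_pact -(pactZ H) -comp_polyZ two_f comp_polyB pactB subrK.
Qed.

Lemma Omega_H v : H (Omega u E F H v) = Omega u E F H (H v).
Proof.
rewrite /Omega (TD lH) (TZ lH) H_pact; congr (_ *: _ + _).
have hHF x : H (F x) = F (H x) - F x by rewrite relHF addrK.
have hHE x : H (E x) = E (H x) + E x by rewrite relHE subrK.
by rewrite hHF hHE (TD lF) addrK.
Qed.

Lemma zact_E p v : E (zact u E F H p v) = zact u E F H p (E v).
Proof. exact: (pact_commute lE Omega_E). Qed.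
Lemma zact_F p v : F (zact u E F H p v) = zact u E F H p (F v).
Proof. exact: (pact_commute lF Omega_F). Qed.
Lemma zact_H p v : H (zact u E F H p v) = zact u E F H p (H v).
Proof. exact: (pact_commute lH Omega_H). Qed.
Lemma zact_lin p : linear (zact u E F H p).
Proof. exact: (pact_lin lOmega). Qed.

End Rm.

Definition dlt (q : {poly C}) := q - (q \Po ('X - 1)).

Lemma size_Xm1 : size ('X - 1 : {poly C}) = 2%N.
Proof. by rewrite -polyC1 size_XsubC. Qed.

Lemma size_compm1 (p : {poly C}) : size (p \Po ('X - 1)) = size p.
Proof. exact: size_comp_poly2 size_Xm1. Qed.

Lemma comp_m1_MXaddC (p : {poly C}) c :
  (p * 'X + c%:P) \Po ('X - 1) = (p \Po ('X - 1)) * 'X - (p \Po ('X - 1)) + c%:P.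
Proof. by rewrite comp_poly_MXaddC mulrBr mulr1. Qed.

Lemma coef_compm1_top (p : {poly C}) m : (size p <= m.+1)%N ->
  (p \Po ('X - 1))`_m = p`_m.
Proof.
elim/poly_ind: p m => [|p c IH] m hs; first by rewrite comp_poly0.
rewrite comp_m1_MXaddC !coefD coefN !coefMX !coefC.
have hsp : (size p <= m)%N.
  move: hs; rewrite size_MXaddC; case: ifP => [/andP [/eqP -> _]|] //; by rewrite size_poly0.
case: m hs hsp => [|m] hs hsp /=.
  have -> : p = 0 by apply/eqP; rewrite -size_poly_eq0 -leqn0.
  by rewrite comp_poly0 coef0 subr0.
rewrite IH // [X in _ - X]nth_default ?subr0 ?addr0 //.
by rewrite size_compm1.
Qed.

Lemma dlt_MXaddC (p : {poly C}) c : dlt (p * 'X + c%:P) = dlt p * 'X + (p \Po ('X - 1)).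
Proof. rewrite /dlt comp_m1_MXaddC mulrBl. set a := p \Po _. set b := p * 'X.
by rewrite [a * 'X - a + _]addrC addrKA opprB addrA addrAC. Qed.

Lemma dlt0 : dlt 0 = 0.
Proof. by rewrite /dlt comp_poly0 subr0. Qed.

Lemma size_MXaddC_le (p : {poly C}) c n : (size (p * 'X + c%:P)%R <= n.+1)%N -> (size p <= n)%N.
Proof. rewrite size_MXaddC; case: ifP => [/andP [/eqP -> _]|] //; by rewrite size_poly0. Qed.

Lemma dlt_size (q : {poly C}) n : (size q <= n.+1)%N -> (size (dlt q) <= n)%N.
Proof.
elim/poly_ind: q n => [|p c IH] n hs; first by rewrite dlt0 size_poly0.
have hp := size_MXaddC_le hs.
rewrite dlt_MXaddC; case: n hs hp IH => [|m] hs hp IH.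
  have -> : p = 0 by apply/eqP; rewrite -size_poly_eq0 -leqn0.
  by rewrite dlt0 mul0r comp_poly0 addr0 size_poly0.
rewrite (leq_trans (size_polyD _ _)) // geq_max size_compm1 hp andbT.
by rewrite (leq_trans (size_mulX_leq _)) // ltnS IH.
Qed.

Lemma dlt_top (q : {poly C}) n : (size q <= n.+2)%N -> (dlt q)`_n = n.+1%:R * q`_n.+1.
Proof.
elim/poly_ind: q n => [|p c IH] n hs; first by rewrite dlt0 !coef0 mulr0.
have hp := size_MXaddC_le hs.
rewrite dlt_MXaddC coefD coefMX coef_compm1_top // (coefD (p * 'X)) coefMX coefC /= addr0.
case: n hs hp IH => [|m] hs hp IH /=; first by rewrite add0r mul1r.
by rewrite IH ?(leq_trans hp) // -[in RHS]natr1 mulrDl mul1r.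
Qed.

Lemma size_chop (q : {poly C}) n : (size q <= n.+1)%N -> (size (q - q`_n *: 'X^n)%R <= n)%N.
Proof.
move=> hs; apply/leq_sizeP => j hj.
rewrite coefB coefZ coefXn; case: eqP => [->|/eqP ne]; first by rewrite mulr1 subrr.
rewrite mulr0 subr0; apply: nth_default; rewrite (leq_trans hs) //.
by rewrite ltn_neqAle eq_sym ne hj.
Qed.

Section Direct.
Variables (f : {poly C}) (V : lmodType C) (E F H : V -> V).
Hypothesis hV : is_Rmod f E F H.
Variable eta : C.
Hypothesis heta : eta != 0.

Lemma direct n (N : seq ({poly C} * V)) :
  (forall t, t \in N -> E t.2 = eta *: t.2 /\ (size t.1 <= n)%N) ->
  \sum_(t <- N) pact H t.1 t.2 = 0 -> forall i, \sum_(t <- N) t.1`_i *: t.2 = 0.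
Proof.
elim: n N => [|n IH] N hN hs i.
  rewrite big1_seq // => t /andP [_ /hN [_]].
  by rewrite leqn0 size_poly_eq0 => /eqP ->; rewrite coef0 scale0r.
have lH := lH hV; have lE := lE hV.
have hA : \sum_(t <- map (fun t => (dlt t.1, t.2)) N) pact H t.1 t.2 = 0.
  rewrite big_map.
  have -> : \sum_(t <- N) pact H (dlt t.1) t.2 =
           \sum_(t <- N) (pact H t.1 t.2 - eta^-1 *: E (pact H t.1 t.2)).
    apply: eq_big_seq => t /hN [hw _].
    by rewrite /dlt pactB (E_pact hV) hw (TZ (pact_lin lH _)) scalerA mulVf // scale1r.
  by rewrite big_split /= sumrN -scaler_sumr -(Tsum lE) hs (T0 lE) scaler0 subr0.
have hN' : forall t, t \in map (fun t => (dlt t.1, t.2)) N ->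
    E t.2 = eta *: t.2 /\ (size t.1 <= n)%N.
  move=> t /mapP [t0 ht0 ->] /=; have [w sz] := hN t0 ht0; split => //; exact: dlt_size.
have hIA := IH _ hN' hA.
have hB : \sum_(t <- N) t.1`_n *: t.2 = 0.
  case: n {IH} hN hA hN' hIA => [|m] hN hA hN' hIA.
    rewrite -[RHS]hs; apply: eq_big_seq => t /hN [_ hsz].
    by rewrite (pact_wide _ _ hsz) big_ord1.
  have := hIA m; rewrite big_map /=.
  have -> : \sum_(t <- N) (dlt t.1)`_m *: t.2 = \sum_(t <- N) m.+1%:R *: (t.1`_m.+1 *: t.2).
    by apply: eq_big_seq => t /hN [_ hsz]; rewrite dlt_top // scalerA.
  rewrite -scaler_sumr => /eqP; rewrite scaler_eq0 (negbTE (natr_neq0C m)) /=.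
  by move/eqP.
have hN'' : forall t, t \in map (fun t : {poly C} * V => (t.1 - t.1`_n *: 'X^n, t.2)) N ->
    E t.2 = eta *: t.2 /\ (size t.1 <= n)%N.
  move=> t /mapP [t0 ht0 ->] /=; have [w sz] := hN t0 ht0; split => //; exact: size_chop.
have hC : \sum_(t <- map (fun t : {poly C} * V => (t.1 - t.1`_n *: 'X^n, t.2)) N) pact H t.1 t.2 = 0.
  rewrite big_map /=.
  under eq_bigr do rewrite pactB pactZ.
  rewrite big_split /= sumrN hs add0r.
  have -> : \sum_(t <- N) t.1`_n *: pact H 'X^n t.2 = pact H 'X^n (\sum_(t <- N) t.1`_n *: t.2).
    rewrite (Tsum (pact_lin lH _)); apply: eq_bigr => t _; by rewrite (TZ (pact_lin lH _)).
  by rewrite hB (T0 (pact_lin lH _)) oppr0.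
have := IH _ hN'' hC i; rewrite big_map /=.
case: (eqVneq i n) => [->|ne]; first by rewrite hB.
move=> h; rewrite -[RHS]h; apply: eq_bigr => t _.
by rewrite coefB coefZ coefXn (negbTE ne) mulr0 subr0.
Qed.
End Direct.

Inductive word := WGen | WE of word | WF of word | WH of word
  | WAdd of word & word | WScale of C & word.

Fixpoint ev (V : lmodType C) (E F H : V -> V) (w : V) (t : word) : V :=
  match t with
  | WGen => w
  | WE t => E (ev E F H w t)
  | WF t => F (ev E F H w t)
  | WH t => H (ev E F H w t)
  | WAdd t s => ev E F H w t + ev E F H w s
  | WScale a t => a *: ev E F H w t
  end.

Definition NFF (u : {poly C}) (eta : C) (x : {poly C} * {poly C}) :=
  [:: ((2%:R * eta)^-1 *: (x.1 \Po ('X + 1)), x.2 * 'X);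
      (- (2%:R * eta)^-1 *: ((x.1 \Po ('X + 1)) * (u \Po ('X + 1))), x.2)].

Fixpoint NF (u : {poly C}) (eta : C) (t : word) : seq ({poly C} * {poly C}) :=
  match t with
  | WGen => [:: (1, 1)]
  | WE t => map (fun x => (eta *: (x.1 \Po ('X - 1)), x.2)) (NF u eta t)
  | WF t => flatten (map (NFF u eta) (NF u eta t))
  | WH t => map (fun x => ('X * x.1, x.2)) (NF u eta t)
  | WAdd t s => NF u eta t ++ NF u eta s
  | WScale a t => map (fun x => (a *: x.1, x.2)) (NF u eta t)
  end.

Section Repr.
Variables (f u : {poly C}) (V : lmodType C) (E F H : V -> V).
Hypothesis hV : is_Rmod f E F H.
Hypothesis hu : f = 2%:R^-1 *: (u \Po ('X + 1) - u).
Variable eta : C.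
Hypothesis heta : eta != 0.
Variable w : V.
Hypothesis hw : E w = eta *: w.

Local Notation zt := (zact u E F H).

Lemma Fw : F w = (2%:R * eta)^-1 *: (Omega u E F H w - pact H (u \Po ('X + 1)) w).
Proof.
rewrite /Omega hw (TZ (lF hV)) addrK !scalerA mulVf ?scale1r //.
by rewrite mulf_neq0 // (two_neq0).
Qed.

Lemma reprNF t : ev E F H w t = \sum_(x <- NF u eta t) pact H x.1 (zt x.2 w).
Proof.
have lH := lH hV; have lE := lE hV; have lF := lF hV.
elim: t => [|t IH|t IH|t IH|t IHt s IHs|a t IH] /=.
- by rewrite big_seq1 pact1 /zact pact1.
- rewrite big_map IH (Tsum lE); apply: eq_bigr => x _.
  by rewrite (E_pact hV) (zact_E hV hu) hw (TZ (zact_lin u hV _)) (TZ (pact_lin lH _)) pactZ.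
- rewrite big_flatten big_map IH (Tsum lF) /=; apply: eq_bigr => x _.
  rewrite big_cons big_seq1 /= (F_pact hV) (zact_F hV hu) Fw.
  rewrite (TZ (zact_lin u hV _)) (TB (zact_lin u hV _)).
  have -> : zt x.2 (Omega u E F H w) = zt (x.2 * 'X) w by rewrite /zact pactMX'.
  have -> : zt x.2 (pact H (u \Po ('X + 1)) w) = pact H (u \Po ('X + 1)) (zt x.2 w).
    apply: (pact_commute (zact_lin u hV _)) => v; by rewrite (zact_H u hV).
  rewrite (TZ (pact_lin lH _)) (TB (pact_lin lH _)) -(pactM lH) !pactZ scalerBr.
  by rewrite scaleNr.
- rewrite big_map IH (Tsum lH); apply: eq_bigr => x _.
  by rewrite (pactM lH) (pactX lH).
- by rewrite big_cat IHt IHs.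
- by rewrite big_map IH scaler_sumr; apply: eq_bigr => x _; rewrite pactZ.
Qed.
End Repr.

Lemma conv (W : lmodType C) (T : W -> W) (lT : linear T) (N : seq ({poly C} * W)) n :
  (forall x, x \in N -> (size x.1 <= n)%N) ->
  \sum_(x <- N) pact T x.1 x.2 = \sum_(i < n) iter i T (\sum_(x <- N) x.1`_i *: x.2).
Proof.
move=> hN.
have -> : \sum_(x <- N) pact T x.1 x.2 = \sum_(x <- N) \sum_(i < n) x.1`_i *: iter i T x.2.
  by apply: eq_big_seq => x /hN h; rewrite (pact_wide _ _ h).
rewrite exchange_big /=; apply: eq_bigr => i _.
rewrite (Tsum (iter_lin lT i)); apply: eq_bigr => x _; by rewrite (TZ (iter_lin lT i)).
Qed.

Section Exist.
Variables (f u : {poly C}) (V : lmodType C) (E F H : V -> V).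
Hypothesis hV : is_Rmod f E F H.
Hypothesis hu : f = 2%:R^-1 *: (u \Po ('X + 1) - u).
Variable eta : C.
Hypothesis heta : eta != 0.
Variable w : V.
Hypothesis hw : E w = eta *: w.
Hypothesis hgen : generates E F H w.

Local Notation zt := (zact u E F H).

Lemma zact_gen r : zt r w = 0 -> forall v, zt r v = 0.
Proof.
move=> h0; apply: hgen => //.
- exact: (T0 (zact_lin u hV r)).
- by move=> x y hx hy; rewrite (TD (zact_lin u hV r)) hx hy addr0.
- by move=> a x hx; rewrite (TZ (zact_lin u hV r)) hx scaler0.
- move=> x hx; split.
  + by rewrite -(zact_E hV hu) hx (T0 (lE hV)).
  + by rewrite -(zact_F hV hu) hx (T0 (lF hV)).
  + by rewrite -(zact_H u hV) hx (T0 (lH hV)).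
Qed.

Lemma ev_surj x : exists t, ev E F H w t = x.
Proof.
apply: (hgen (S := fun x => exists t, ev E F H w t = x)).
- by exists (WScale 0 WGen); rewrite /= scale0r.
- by move=> x0 y0 [t <-] [s <-]; exists (WAdd t s).
- by move=> a x0 [t <-]; exists (WScale a t).
- by move=> x0 [t <-]; split; [exists (WE t)|exists (WF t)|exists (WH t)].
- by exists WGen.
Qed.

Section Target.
Variables (W : lmodType C) (E' F' H' : W -> W).
Hypothesis hW : is_Rmod f E' F' H'.
Variable w' : W.
Hypothesis hw' : E' w' = eta *: w'.
Hypothesis hZ : forall p, ZV u E F H p -> zact u E' F' H' p w' = 0.

Lemma transfer t : ev E F H w t = 0 -> ev E' F' H' w' t = 0.
Proof.
set N := NF u eta t.
set n := (\max_(x <- N) size x.1)%N.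
have hn : forall x, x \in N -> (size x.1 <= n)%N.
  by move=> x hx; rewrite /n; apply: leq_bigmax_seq.
rewrite (reprNF hV hu heta hw) => h0.
have hi : forall i, \sum_(x <- N) x.1`_i *: zt x.2 w = 0.
  move=> i.
  have h1 : forall y, y \in map (fun x => (x.1, zt x.2 w)) N ->
      E y.2 = eta *: y.2 /\ (size y.1 <= n)%N.
    move=> y /mapP [x hx ->] /=; split; last exact: hn.
    by rewrite (zact_E hV hu) hw (TZ (zact_lin u hV _)).
  have h2 : \sum_(y <- map (fun x => (x.1, zt x.2 w)) N) pact H y.1 y.2 = 0 by rewrite big_map.
  by have := direct hV heta h1 h2 i; rewrite big_map.
have hN2 : forall y, y \in map (fun x => (x.1, zact u E' F' H' x.2 w')) N -> (size y.1 <= n)%N.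
  by move=> y /mapP [x hx ->] /=; exact: hn.
have -> : ev E' F' H' w' t = \sum_(y <- map (fun x => (x.1, zact u E' F' H' x.2 w')) N) pact H' y.1 y.2.
  by rewrite (reprNF hW hu heta hw') big_map.
rewrite (conv (lH hW) hN2); apply: big1 => i _; rewrite big_map /=.
have -> : \sum_(x <- N) x.1`_i *: zact u E' F' H' x.2 w' =
          zact u E' F' H' (\sum_(x <- N) x.1`_i *: x.2) w'.
  rewrite /zact pact_sum; apply: eq_bigr => x _; by rewrite pactZ.
rewrite hZ ?(T0 (iter_lin (lH hW) i)) //.
apply: zact_gen.
rewrite -(hi i) /zact pact_sum; apply: eq_bigr => x _; by rewrite pactZ.
Qed.

Definition pickw (x : V) : word := epsilon (inhabits WGen) (fun t => ev E F H w t = x).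
Lemma pickwP x : ev E F H w (pickw x) = x.
Proof. by apply: (epsilon_spec (inhabits WGen) (fun t => ev E F H w t = x)); apply: ev_surj. Qed.

Lemma ev_eq t s : ev E F H w t = ev E F H w s -> ev E' F' H' w' t = ev E' F' H' w' s.
Proof.
move=> h; have := transfer (t := WAdd t (WScale (-1) s)); rewrite /= !scaleN1r h subrr.
by move=> /(_ erefl) /eqP; rewrite subr_eq0 => /eqP.
Qed.

Definition phi x := ev E' F' H' w' (pickw x).
Lemma phi_ev t : phi (ev E F H w t) = ev E' F' H' w' t.
Proof. exact: ev_eq (pickwP _). Qed.

Lemma phi_hom : Rhom E F H E' F' H' phi.
Proof.
split.
- move=> a x y.
  have -> : a *: x + y = ev E F H w (WAdd (WScale a (pickw x)) (pickw y)) by rewrite /= !pickwP.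
  by rewrite phi_ev.
- move=> x; have -> : E x = ev E F H w (WE (pickw x)) by rewrite /= pickwP.
  by rewrite phi_ev.
- move=> x; have -> : F x = ev E F H w (WF (pickw x)) by rewrite /= pickwP.
  by rewrite phi_ev.
- move=> x; have -> : H x = ev E F H w (WH (pickw x)) by rewrite /= pickwP.
  by rewrite phi_ev.
Qed.

Lemma phi_w : phi w = w'.
Proof. by have := phi_ev WGen. Qed.

Lemma hom_ev (psi : V -> W) : Rhom E F H E' F' H' psi -> psi w = w' ->
  forall t, psi (ev E F H w t) = ev E' F' H' w' t.
Proof.
case=> lpsi hE hF hH hpw; elim=> [|t IH|t IH|t IH|t IHt s IHs|a t IH] /=.
- exact: hpw.
- by rewrite hE IH.
- by rewrite hF IH.
- by rewrite hH IH.
- by rewrite (TD lpsi) IHt IHs.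
- by rewrite (TZ lpsi) IH.
Qed.

Lemma phi_unique psi : Rhom E F H E' F' H' psi -> psi w = w' -> forall x, psi x = phi x.
Proof. move=> h hw0 x; by rewrite -(pickwP x) (hom_ev h hw0) phi_ev. Qed.

End Target.

Lemma exist_induced : is_induced f u eta (ZV u E F H) E F H.
Proof.
exists w; split => //.
move=> W E' F' H' hW w' hw' hZ.
exists (phi E' F' H' w'); split.
- exact: phi_hom.
- exact: phi_w.
- exact: phi_unique.
Qed.
End Exist.

Section GenSub.
Variables (V : lmodType C) (E F H : V -> V) (w : V).

Definition genP (x : V) : Prop :=
  forall S : V -> Prop,
    S 0 -> (forall x y, S x -> S y -> S (x + y)) ->
    (forall (a : C) x, S x -> S (a *: x)) ->
    (forall x, S x -> [/\ S (E x), S (F x) & S (H x)]) ->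
    S w -> S x.

Definition genb (x : V) : bool := if excluded_middle_informative (genP x) then true else false.

Lemma genbP x : reflect (genP x) (genb x).
Proof. rewrite /genb; case: excluded_middle_informative => h; by constructor. Qed.

Fact genb_submod_closed : GRing.submod_closed genb.
Proof.
split.
  by apply/genbP => S h0.
move=> a x y /genbP hx /genbP hy; apply/genbP => S h0 hD hZ hO hS.
exact: hD _ _ (hZ _ _ (hx S h0 hD hZ hO hS)) (hy S h0 hD hZ hO hS).
Qed.
HB.instance Definition _ := GRing.isSubmodClosed.Build C V genb genb_submod_closed.

Inductive gsub : predArgType := GSub u & u \in genb.
Definition gval (x : gsub) : V := let: GSub u _ := x in u.
HB.instance Definition _ := [isSub of gsub for gval].
HB.instance Definition _ := [Choice of gsub by <:].
HB.instance Definition _ := [SubChoice_isSubZmodule of gsub by <:].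
HB.instance Definition _ := [SubZmodule_isSubLmodule of gsub by <:].

Lemma gval_lin : linear gval. Proof. by []. Qed.

Lemma genb_op (O : V -> V) : (forall x, genP x -> genP (O x)) -> forall x : gsub, O (gval x) \in genb.
Proof. move=> hO [x /genbP hx] /=; apply/genbP; exact: hO. Qed.

Lemma genE x : genP x -> genP (E x).
Proof. move=> hx S h0 hD hZ hO hS; by have [] := hO _ (hx S h0 hD hZ hO hS). Qed.
Lemma genF x : genP x -> genP (F x).
Proof. move=> hx S h0 hD hZ hO hS; by have [] := hO _ (hx S h0 hD hZ hO hS). Qed.
Lemma genH x : genP x -> genP (H x).
Proof. move=> hx S h0 hD hZ hO hS; by have [] := hO _ (hx S h0 hD hZ hO hS). Qed.

Definition gE (x : gsub) : gsub := GSub (genb_op genE x).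
Definition gF (x : gsub) : gsub := GSub (genb_op genF x).
Definition gH (x : gsub) : gsub := GSub (genb_op genH x).

Lemma genw : w \in genb.
Proof. by apply/genbP => S. Qed.
Definition gw : gsub := GSub genw.

Lemma gval_pact (T : V -> V) (gT : gsub -> gsub) (h : forall x, gval (gT x) = T (gval x)) p x :
  gval (pact gT p x) = pact T p (gval x).
Proof. exact: (pact_commute gval_lin h). Qed.

Variable f : {poly C}.
Hypothesis hV : is_Rmod f E F H.

Lemma glin (O : V -> V) (gO : gsub -> gsub) (h : forall x, gval (gO x) = O (gval x)) :
  linear O -> linear gO.
Proof. move=> lO a x y; apply: val_inj; by rewrite /= h gval_lin lO -!h. Qed.

Lemma gRmod : is_Rmod f gE gF gH.
Proof.
split.
- exact: (glin (O := E) (gO := gE) (fun x => erefl) (lE hV)).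
- exact: (glin (O := F) (gO := gF) (fun x => erefl) (lF hV)).
- exact: (glin (O := H) (gO := gH) (fun x => erefl) (lH hV)).
move=> x; split; apply: val_inj; rewrite ?(TB gval_lin) ?(TN gval_lin) /=.
- by rewrite (gval_pact (T := H)) //; case: hV => _ _ _ /(_ (gval x)) [].
- by case: hV => _ _ _ /(_ (gval x)) [].
- by case: hV => _ _ _ /(_ (gval x)) [].
Qed.

Variable u : {poly C}.
Lemma gval_Omega x : gval (Omega u gE gF gH x) = Omega u E F H (gval x).
Proof. by rewrite /Omega (TD gval_lin) (TZ gval_lin) (gval_pact (T := H)). Qed.

Lemma gval_zact p x : gval (zact u gE gF gH p x) = zact u E F H p (gval x).
Proof. exact: (gval_pact gval_Omega). Qed.

Variable eta : C.
Variable I : {poly C} -> Prop.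
Hypothesis hw : E w = eta *: w.
Hypothesis hI : forall p, I p -> zact u E F H p w = 0.
Hypothesis huniv : forall (W : lmodType C) (E' F' H' : W -> W), is_Rmod f E' F' H' ->
      forall w' : W, E' w' = eta *: w' -> (forall p, I p -> zact u E' F' H' p w' = 0) ->
      exists phi : V -> W,
        [/\ Rhom E F H E' F' H' phi, phi w = w' &
           forall psi : V -> W, Rhom E F H E' F' H' psi -> psi w = w' ->
             forall x, psi x = phi x].

Lemma induced_gen : generates E F H w.
Proof.
have hgw : gE gw = eta *: gw by apply: val_inj; rewrite /= hw.
have hZ : forall p, I p -> zact u gE gF gH p gw = 0.
  move=> p hp; apply: val_inj; change (gval (zact u gE gF gH p gw) = gval 0).
  by rewrite gval_zact /= hI.
have [phi1 [[l1 h1E h1F h1H] h1w _]] := huniv gRmod hgw hZ.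
have [phi0 [_ _ h0u]] := huniv hV hw hI.
have hid : forall x, x = phi0 x.
  by apply: h0u => //; split => //; move=> a x y.
have hc : forall x, gval (phi1 x) = phi0 x.
  apply: h0u; last by rewrite h1w.
  split.
  - by move=> a x y; rewrite l1 gval_lin.
  - by move=> x; rewrite h1E.
  - by move=> x; rewrite h1F.
  - by move=> x; rewrite h1H.
move=> S h0 hD hZS hO hS x.
rewrite (hid x) -hc; case: (phi1 x) => y /genbP hy /=; exact: hy.
Qed.

End GenSub.

Section Ideal.
Variable I : {poly C} -> Prop.
Hypothesis hI : is_ideal I.

Lemma idealD p q : I p -> I q -> I (p + q). Proof. by case: hI => _ h _; apply: h. Qed.
Lemma idealM p q : I q -> I (p * q). Proof. by case: hI => _ _ h; apply: h. Qed.
Lemma ideal0 : I 0. Proof. by case: hI. Qed.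
Lemma idealB p q : I p -> I q -> I (p - q).
Proof. move=> hp hq; apply: idealD => //; rewrite -mulN1r; exact: idealM. Qed.

Lemma min_exists n : (exists q, [/\ I q, q != 0 & (size q <= n)%N]) ->
  exists g, [/\ I g, g != 0 & forall q, I q -> q != 0 -> (size g <= size q)%N].
Proof.
elim: n => [|n IH] [q [hq nq sq]].
  by move: sq; rewrite leqn0 size_poly_eq0 (negbTE nq).
case: (classic (exists q, [/\ I q, q != 0 & (size q <= n)%N])) => [/IH //|hn].
exists q; split => // q' hq' nq'; rewrite (leq_trans sq) // ltnNge; apply/negP => h.
by apply: hn; exists q'.
Qed.

Lemma ideal_sep p : ~ I p -> exists h : {poly C},
  [/\ h \is monic, (1 < size h)%N, (forall q, I q -> h %| q) & ~~ (h %| p)].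
Proof.
move=> np.
case: (classic (exists q, [/\ I q, q != 0 & (size q <= size q)%N])) => [hex|hno].
  have [q0 [hq0 nq0 _]] := hex.
  have [g [hg ng gmin]] := min_exists (n := size q0) (ex_intro _ q0 (And3 hq0 nq0 (leqnn _))).
  have hdiv : forall q, I q -> g %| q.
    move=> q hq; rewrite /dvdp; apply/negPn/negP => nm.
    have hm : I (q %% g).
      have -> : q %% g = q - q %/ g * g by rewrite {2}(divp_eq q g) addrAC subrr add0r.
      by apply: idealB => //; apply: idealM.
    by have := gmin _ hm nm; rewrite leqNgt ltn_modpN0.
  have lc : lead_coef g != 0 by rewrite lead_coef_eq0.
  have gp : ~~ (g %| p).
    apply/negP => /dvdpP [k hk]; apply: np; rewrite hk; exact: idealM.
  exists ((lead_coef g)^-1 *: g); split.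
  - by rewrite monicE lead_coefZ mulVf.
  - rewrite size_scale ?invr_eq0 //; rewrite ltnNge; apply/negP => s1.
    have hc := size1_polyC s1.
    have c0 : g`_0 != 0 by move: ng; rewrite {1}hc polyC_eq0.
    apply: np; have -> : p = ((g`_0)^-1 *: p) * g.
      by rewrite [X in _ * X]hc mulrC mul_polyC scalerA mulfV // scale1r.
    exact: idealM.
  - by move=> q hq; rewrite dvdpZl ?invr_eq0 // hdiv.
  - by rewrite dvdpZl ?invr_eq0.
have h0 : forall q, I q -> q = 0.
  move=> q hq; apply/eqP; apply/negPn/negP => nq; apply: hno; by exists q.
have pn0 : p != 0 by apply/negP => /eqP e; apply: np; rewrite e; exact: ideal0.
have xp0 : 'X * p != 0 by rewrite mulf_neq0 // polyX_eq0.
have lc : lead_coef ('X * p) != 0 by rewrite lead_coef_eq0.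
have sz : size ('X * p) = (size p).+1 by rewrite mulrC size_mulX.
exists ((lead_coef ('X * p))^-1 *: ('X * p)); split.
- by rewrite monicE lead_coefZ mulVf.
- by rewrite size_scale ?invr_eq0 // sz ltnS size_poly_gt0.
- by move=> q /h0 ->; rewrite dvdp0.
- rewrite dvdpZl ?invr_eq0 //; apply/negP => /(dvdp_leq pn0).
  by rewrite sz ltnn.
Qed.
End Ideal.

Section WMod.
Variable h : {poly C}.
Local Notation A := {poly %/ h}.

Definition Wt : Type := {poly A}.
HB.instance Definition _ := GRing.Zmodule.on Wt.

Definition scW (c : C) (P : Wt) : Wt := (c%:A : A)%:P * (P : {poly A}).

Lemma inalgM (a b : C) : ((a * b)%:A : A) = a%:A * b%:A.
Proof. by rewrite -scalerAl mul1r scalerA. Qed.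
Lemma inalgD (a b : C) : ((a + b)%:A : A) = a%:A + b%:A.
Proof. by rewrite scalerDl. Qed.

Fact scWA a b v : scW a (scW b v) = scW (a * b) v.
Proof. by rewrite /scW mulrA -polyCM inalgM. Qed.
Fact scW1 : left_id 1 scW.
Proof. by move=> v; rewrite /scW scale1r polyC1 mul1r. Qed.
Fact scWDr : right_distributive scW +%R.
Proof. by move=> a u v; rewrite /scW mulrDr. Qed.
Fact scWDl v : {morph scW^~ v : a b / a + b}.
Proof. by move=> a b; rewrite /scW inalgD polyCD mulrDl. Qed.

HB.instance Definition _ := GRing.Zmodule_isLmodule.Build C Wt scWA scW1 scWDr scWDl.

Lemma scWE (c : C) (P : Wt) : c *: P = (c%:A : A)%:P * (P : {poly A}).
Proof. by []. Qed.

Local Notation sA := ('X + 1 : {poly A}).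
Local Notation mA := ('X - 1 : {poly A}).
Lemma csm (Q : {poly A}) : (Q \Po sA) \Po mA = Q.
Proof. by rewrite -polyC1 comp_polyXaddC_K. Qed.
Lemma cms (Q : {poly A}) : (Q \Po mA) \Po sA = Q.
Proof. by have := comp_polyXaddC_K Q (-1); rewrite polyCN opprK polyC1. Qed.

Local Notation mp := (map_poly (in_alg A)).
Lemma mp_s : mp ('X + 1) = sA.
Proof. by rewrite rmorphD /= map_polyX rmorph1. Qed.

Variables (u : {poly C}) (eta : C).
Local Notation qx := ('qX : A).
Local Notation uA := (mp u).
Local Notation e := ((eta%:A : A)%:P).
Local Notation c := ((((2%:R * eta)^-1)%:A : A)%:P).

Definition HW (P : Wt) : Wt := 'X * (P : {poly A}).
Definition EW (P : Wt) : Wt := e * ((P : {poly A}) \Po mA).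
Definition FW (P : Wt) : Wt := c * (((P : {poly A}) \Po sA) * (qx%:P - (uA \Po sA))).

Lemma pactW (q : {poly C}) (P : Wt) : pact HW q P = mp q * (P : {poly A}).
Proof.
elim/poly_ind: q P => [|q a IH] P; first by rewrite pact0 rmorph0 mul0r.
rewrite pactD pactMX' pactC IH scWE /HW rmorphD rmorphM /= map_polyX map_polyC /=.
by rewrite mulrDl mulrA.
Qed.

Lemma lHW : linear HW.
Proof. move=> a x y; rewrite /HW !scWE. by rewrite mulrDr mulrCA. Qed.

Lemma lEW : linear EW.
Proof.
move=> a x y; rewrite /EW !scWE comp_polyD comp_polyM comp_polyC.
by rewrite mulrDr mulrCA.
Qed.

Lemma rid_lin (a c X Y K : {poly A}) : c * ((a * X + Y) * K) = a * (c * (X * K)) + c * (Y * K).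
Proof. ring. Qed.

Lemma lFW : linear FW.
Proof.
move=> a x y; rewrite /FW !scWE comp_polyD comp_polyM comp_polyC.
exact: rid_lin.
Qed.

Lemma rid1 (e c t P x U V : {poly A}) : e * c = t ->
  e * (c * (P * (x - U))) - c * (e * P * (x - V)) = t * (V - U) * P.
Proof. move=> <-; ring. Qed.
Lemma rid2 (X e Q : {poly A}) : X * (e * Q) - e * ((X - 1) * Q) = e * Q.
Proof. ring. Qed.
Lemma rid3 (X c Q K : {poly A}) : X * (c * (Q * K)) - c * ((X + 1) * Q * K) = - (c * (Q * K)).
Proof. ring. Qed.
Lemma rid4 (d c e P x V : {poly A}) : d * c * e = 1 ->
  d * (c * (e * P * (x - V))) + V * P = x * P.
Proof. move=> h1; have -> : d * (c * (e * P * (x - V))) = (d * c * e) * P * (x - V) by ring.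
rewrite h1; ring. Qed.

Hypothesis heta : eta != 0.
Variable f : {poly C}.
Hypothesis hu : f = 2%:R^-1 *: (u \Po ('X + 1) - u).

Lemma ec : e * c = ((2%:R^-1 : C)%:A : A)%:P.
Proof.
rewrite -polyCM -inalgM; congr ((_%:A)%:P).
by rewrite invfM mulrCA mulfV // mulr1.
Qed.

Lemma dce : ((2%:R : C)%:A : A)%:P * c * e = 1.
Proof.
rewrite -!polyCM -!inalgM invfM mulrA mulfV ?(two_neq0) // mul1r mulVf //.
by rewrite scale1r polyC1.
Qed.

Lemma mp_f : mp f = ((2%:R^-1 : C)%:A : A)%:P * (uA \Po sA - uA).
Proof. by rewrite hu -mul_polyC rmorphM rmorphB /= map_polyC map_comp_poly mp_s. Qed.

Lemma WRmod : is_Rmod f EW FW HW.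
Proof.
split; [exact: lEW | exact: lFW | exact: lHW |] => P; split.
- rewrite pactW /EW /FW !comp_polyM !comp_polyC comp_polyB !csm !cms comp_polyC mp_f.
  exact: rid1 ec.
- by rewrite /EW /HW comp_polyM comp_polyX; apply: rid2.
- by rewrite /FW /HW comp_polyM comp_polyX; apply: rid3.
Qed.

Local Notation iq := (in_qpoly h).

Lemma OmegaW (P : Wt) : Omega u EW FW HW P = qx%:P * (P : {poly A}).
Proof.
rewrite /Omega pactW scWE /EW /FW comp_polyM comp_polyC cms map_comp_poly mp_s.
exact: rid4 dce.
Qed.

Lemma iqC (a : C) : iq a%:P = a%:A.
Proof. by rewrite -alg_polyC in_qpolyZ in_qpoly1. Qed.

Lemma rid5 (Q x a P : {poly A}) : Q * (x * P) + a * P = (Q * x + a) * P.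
Proof. ring. Qed.

Lemma zactW (q : {poly C}) (P : Wt) : zact u EW FW HW q P = (iq q)%:P * (P : {poly A}).
Proof.
rewrite /zact; elim/poly_ind: q P => [|q a IH] P.
  by rewrite pact0 in_qpoly0 mul0r.
rewrite pactD pactMX' pactC IH OmegaW scWE in_qpolyD in_qpolyM iqC polyCD polyCM.
exact: rid5.
Qed.

Lemma zactW1 (q : {poly C}) : zact u EW FW HW q (1 : {poly A}) = (iq q)%:P.
Proof. by rewrite zactW mulr1. Qed.

Lemma EW1 : EW (1 : {poly A}) = eta *: (1 : Wt).
Proof. by rewrite /EW scWE -polyC1 comp_polyC. Qed.

Hypothesis hmon : h \is monic.
Hypothesis hsz : (1 < size h)%N.

Lemma mkm : mk_monic h = h.
Proof. by rewrite /mk_monic hsz hmon. Qed.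

Lemma iq_eq0 q : (iq q == 0) = (h %| q).
Proof.
apply/idP/idP.
  move/eqP/(congr1 val) => /=; rewrite mkm => hr.
  have := Pdiv.RingMonic.rdivp_eq hmon q; rewrite hr addr0 => ->.
  by rewrite dvdp_mull.
move/dvdpP => [k ->]; rewrite in_qpolyM.
have -> : iq h = 0.
  by apply: val_inj => /=; rewrite mkm Pdiv.RingMonic.rmodpp.
by rewrite mulr0.
Qed.

End WMod.

Lemma ZV_ideal (f u : {poly C}) (V : lmodType C) (E F H : V -> V) :
  is_Rmod f E F H -> is_ideal (ZV u E F H).
Proof.
move=> hV; split.
- by move=> v; rewrite /zact pact0.
- move=> p q hp hq v; have h1 := hp v; have h2 := hq v; rewrite /zact in h1 h2 *.
  by rewrite pactD h1 h2 addr0.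
- move=> p q hq v; have h2 := hq v; rewrite /zact in h2 *; rewrite (pactM (lOmega u hV)).
  by rewrite h2 (T0 (pact_lin (lOmega u hV) _)).
Qed.

Lemma hom_zact (f u : {poly C}) (V W : lmodType C) (E F H : V -> V) (E' F' H' : W -> W)
  (phi : V -> W) : is_Rmod f E F H -> is_Rmod f E' F' H' -> Rhom E F H E' F' H' phi ->
  forall p v, phi (zact u E F H p v) = zact u E' F' H' p (phi v).
Proof.
move=> hV hW [lphi hE hF hH] p v; apply: (pact_commute lphi) => x.
rewrite /Omega (TD lphi) (TZ lphi) hF hE; congr (_ + _).
exact: (pact_commute lphi).
Qed.

Unset Implicit Arguments.

Theorem mainTheorem3 (f u : {poly C})
  (hu : f = 2%:R^-1 *: (u \Po ('X + 1) - u))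
  (eta : C) (heta : eta != 0)
  (V : lmodType C) (E F H : V -> V) (hV : is_Rmod f E F H) :
  (is_whittaker_module eta E F H <->
     exists I : {poly C} -> Prop, is_ideal I /\ is_induced f u eta I E F H)
  /\ (forall I : {poly C} -> Prop, is_ideal I -> is_induced f u eta I E F H ->
        forall p : {poly C}, I p <-> ZV u E F H p).
Proof.
split.
  split.
    move=> [w [hw hgen]]; exists (ZV u E F H); split; first exact: ZV_ideal hV.
    have := exist_induced hV hu heta hw hgen. done.
  move=> [I [hI [w [hw hIw huniv]]]]; exists w; split => //.
  by have := induced_gen hV hw hIw huniv.
move=> I hI [w [hw hIw huniv]] p.
have hgen := induced_gen hV hw hIw huniv.
split.
  by move=> hp; apply: (zact_gen hV hu hgen); apply: hIw.
move=> hZ; apply: NNPP => np.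
have [h [hmon hsz hdiv hndiv]] := ideal_sep hI np.
have hW := WRmod h heta hu.
have hw' := EW1 h eta.
have [|phi [hphi hphiw _]] := huniv _ _ _ _ hW _ hw'.
  move=> q hq; rewrite (zactW1 h u heta q) (eqP (_ : in_qpoly h q == 0)) ?polyC0 //.
  by rewrite (iq_eq0 hmon hsz) hdiv.
have := hom_zact u hV hW hphi p w.
rewrite hphiw (hZ w) (T0 (let: And4 l _ _ _ := hphi in l)) (zactW1 h u heta) => /esym /eqP.
by rewrite polyC_eq0 (iq_eq0 hmon hsz) (negbTE hndiv).
Qed.
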